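(* For all integers $m_1,m_2\geq 1$ and every $\tau\in\mathbb{Z}$, the number \[ n_{(m_1,m_2)}(\tau)=\frac{1}{m_1+m_2}\sum_{d\mid m_1,\ d\mid m_2}\mu(d)\,(-1)^{(m_1+m_2)(\tau+1)/d}\binom{(m_1\tau+m_1)/d-1}{m_1/d}\binom{(m_2\tau+m_2)/d}{m_2/d} \] is an integer. *)

(* Defs.v *)
From HB Require Import structures.
From mathcomp Require Import all_boot all_order all_algebra.
Set Implicit Arguments. Unset Strict Implicit. Unset Printing Implicit Defensive.
Import Order.TTheory GRing.Theory Num.Theory.
Local Open Scope ring_scope.

Definition moebius (n : nat) : int :=
  if all (fun p => logn p n == 1%N) (primes n) then (-1) ^+ size (primes n) else 0.

Definition gbinom (a : int) (k : nat) : rat :=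
  (\prod_(i < k) (a - i%:Z)%:~R) / (k`!)%:R.

Definition nDT (m1 m2 : nat) (tau : int) : rat :=
  ((m1 + m2)%:R)^-1 *
  \sum_(1 <= d < m1.+1 | ((d %| m1) && (d %| m2))%N)
     ((moebius d)%:~R
      * (-1) ^ (((m1 + m2)%:Z * (tau + 1)) %/ d%:Z)%Z
      * gbinom (((m1%:Z * tau + m1%:Z) %/ d%:Z)%Z - 1) (m1 %/ d)
      * gbinom (((m2%:Z * tau + m2%:Z) %/ d%:Z)%Z) (m2 %/ d)).

(* Main.v *)
Require Import Defs.
From HB Require Import structures.
From mathcomp Require Import all_boot all_order all_algebra.
From mathcomp Require Import zify ring.
Import Order.TTheory GRing.Theory Num.Theory.

Definition Qf (p n : nat) : nat := \prod_(0 <= i < p * n | ~~ (p %| i.+1)) i.+1.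

Lemma fact_nat k : k`! = \prod_(0 <= i < k) i.+1.
Proof. by rewrite fact_prod big_add1. Qed.

Lemma block_div p n : 0 < p ->
  \prod_(p * n <= i < p * n + p | p %| i.+1) i.+1 = p * n.+1.
Proof.
case: p => // p' _.
rewrite big_mkcond addnS big_nat_recr /=; last by rewrite leq_addr.
rewrite -addnS.
have -> : p'.+1 * n + p'.+1 = p'.+1 * n.+1 by rewrite mulnS addnC.
rewrite dvdn_mulr //.
rewrite big1_seq ?mul1n // => i /andP[_].
rewrite mem_index_iota => /andP[h1 h2].
case: ifP => // h3.
have : p'.+1 %| i.+1 - p'.+1 * n.
  by rewrite dvdn_sub ?dvdn_mulr.
move/(dvdn_leq); rewrite subn_gt0 ltnS h1 => /(_ isT).
lia.
Qed.

Lemma fact_split p n : 0 < p -> (p * n)`! = p ^ n * n`! * Qf p n.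
Proof.
move=> p0; elim: n => [|n IH]; first by rewrite /Qf muln0 big_geq.
have E : p * n.+1 = p * n + p by rewrite mulnS addnC.
rewrite /Qf E fact_nat (big_cat_nat _ (leq_addr p (p * n))) //= -fact_nat IH.
rewrite (big_cat_nat _ (leq_addr p (p * n)) (P := fun i => ~~ (p %| i.+1))) //=.
rewrite (bigID (fun i => p %| i.+1) _ (fun i => i.+1)) /= block_div //.
rewrite /Qf factS expnS.
set A := \prod_(_ <= _ < _ | _) _.
set B := \prod_(_ <= _ < _ | _) _.
ring.
Qed.

Definition Qs (p b c : nat) : nat := \prod_(0 <= i < p * c | ~~ (p %| i.+1)) (p * b + i).+1.

Lemma Qf_add p b c : Qf p (b + c) = Qf p b * Qs p b c.
Proof.
rewrite /Qf /Qs mulnDr (big_cat_nat (leq0n (p * b)) (leq_addr _ _)) /=.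
congr (_ * _).
rewrite -{1}[p * b]add0n big_addn addKn.
apply: eq_big => [i|i _]; last by rewrite addnC.
by rewrite -addSn dvdn_addl // dvdn_mulr.
Qed.

Lemma Qf_gt0 p n : 0 < Qf p n.
Proof.
rewrite /Qf; elim/big_ind: _ => // x y; by rewrite muln_gt0 => -> ->.
Qed.

Lemma bin_ratio p A B : 0 < p -> B <= A ->
  'C(p * A, p * B) * Qf p (A - B) = 'C(A, B) * Qs p B (A - B).
Proof.
move=> p0 BA.
have pBA : p * B <= p * A by rewrite leq_mul2l BA orbT.
have h1 := bin_fact pBA.
have h2 := bin_fact BA.
have hA : A = B + (A - B) by rewrite subnKC.
have h3 : Qf p A = Qf p B * Qs p B (A - B) by rewrite {1}hA Qf_add.
have h4 : p ^ A = p ^ B * p ^ (A - B) by rewrite -expnD -hA.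
rewrite -mulnBr !fact_split // h3 h4 -h2 in h1.
set K := p ^ B * B`! * Qf p B * (p ^ (A - B) * (A - B)`!).
have Kp : 0 < K.
  by rewrite /K !muln_gt0 !expn_gt0 p0 !fact_gt0 Qf_gt0.
apply/eqP; rewrite -(eqn_pmul2r Kp); apply/eqP.
rewrite /K.
transitivity ('C(p * A, p * B) * (p ^ B * B`! * Qf p B * (p ^ (A - B) * (A - B)`! * Qf p (A - B)))).
  ring.
rewrite h1. ring.
Qed.

Lemma prod_mod (I : Type) (r : seq I) (P : pred I) (f g : I -> nat) q :
  (forall i, P i -> f i = g i %[mod q]) ->
  \prod_(i <- r | P i) f i = \prod_(i <- r | P i) g i %[mod q].
Proof.
move=> H; elim/big_rec2: _ => // i x y Pi Exy.
by rewrite -modnMm H // Exy modnMm.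
Qed.

Lemma Qs_mod p b c q : q %| p * b -> Qs p b c = Qf p c %[mod q].
Proof.
move=> qd; apply: prod_mod => i _.
by rewrite -addnS -modnDml (eqP qd) add0n.
Qed.

Lemma Qf_coprime p n : prime p -> coprime p (Qf p n).
Proof.
move=> pp; rewrite /Qf; elim/big_ind: _ => [|x y hx hy|i hi].
- exact: coprimen1.
- by rewrite coprimeMr hx hy.
- by rewrite prime_coprime.
Qed.

Lemma coprime_mod p x y : prime p -> x = y %[mod p] -> coprime p x = coprime p y.
Proof. by move=> pp e; rewrite !prime_coprime // /dvdn e. Qed.

Lemma Qs_coprime p b c : prime p -> coprime p (Qs p b c).
Proof.
move=> pp; rewrite (@coprime_mod p _ (Qf p c) pp (@Qs_mod p b c p (dvdn_mulr b (dvdnn p)))).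
exact: Qf_coprime.
Qed.

Lemma binS_m1 M S : 0 < M -> S * 'C(M * S - 1, M) = (S - 1) * 'C(M * S, M).
Proof.
move=> M0; apply/eqP; rewrite -(eqn_pmul2l M0) !mulnA [M * S]mulnC.
have := mul_bin_down (S * M) M; rewrite -subn1 => ->.
by rewrite [S * M]mulnC -{2}[M]muln1 -mulnBr.
Qed.

Definition Hn S M N := 'C(M * S - 1, M) * 'C(N * S, N).

Lemma H_ratio p S M N : prime p -> 0 < S -> 0 < M ->
  Hn S (p * M) (p * N) * (Qf p (M * (S - 1)) * Qf p (N * (S - 1))) =
  Hn S M N * (Qs p M (M * (S - 1)) * Qs p N (N * (S - 1))).
Proof.
move=> pp S0 M0; have p0 := prime_gt0 pp.
have eA X : X * S - X = X * (S - 1) by rewrite mulnBr muln1.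
have r1 := @bin_ratio p (M * S) M p0 (leq_pmulr M S0); rewrite eA in r1.
have r2 := @bin_ratio p (N * S) N p0 (leq_pmulr N S0); rewrite eA in r2.
have b1 := @binS_m1 M S M0.
have b2 : S * 'C(p * M * S - 1, p * M) = (S - 1) * 'C(p * M * S, p * M).
  by apply: binS_m1; rewrite muln_gt0 p0.
rewrite mulnA in r1; rewrite mulnA in r2.
apply/eqP; rewrite -(eqn_pmul2l S0); apply/eqP.
rewrite /Hn.
transitivity ((S * 'C(p * M * S - 1, p * M)) * 'C(p * N * S, p * N) * Qf p (M * (S - 1)) * Qf p (N * (S - 1))).
  ring.
rewrite b2.
transitivity ((S - 1) * ('C(p * M * S, p * M) * Qf p (M * (S - 1))) * ('C(p * N * S, p * N) * Qf p (N * (S - 1)))).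
  ring.
rewrite r1 r2.
transitivity ((S - 1) * 'C(M * S, M) * 'C(N * S, N) * Qs p M (M * (S - 1)) * Qs p N (N * (S - 1))).
  ring.
rewrite -b1. ring.
Qed.

Lemma logn_fact_ext p n L : prime p -> n < L ->
  logn p n`! = \sum_(1 <= k < L) n %/ p ^ k.
Proof.
move=> pp nL; rewrite logn_fact //.
rewrite (big_cat_nat (n := n.+1) (ltn0Sn n) nL) /=.
have -> : \sum_(n.+1 <= k < L) n %/ p ^ k = 0.
  rewrite big_nat_cond big1 // => k /andP[/andP[k1 _] _].
  apply: divn_small; apply: leq_trans k1 _; apply: ltnW.
  exact: ltn_expl (prime_gt1 pp).
by rewrite addn0.
Qed.

Definition carry q x y : nat := (q <= x %% q + y %% q).

Lemma legendre_bin p X Y L : prime p -> X + Y < L ->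
  logn p 'C(X + Y, X) = \sum_(1 <= k < L) carry (p ^ k) X Y.
Proof.
move=> pp lt.
have h := bin_fact (leq_addr Y X); rewrite addKn in h.
have Cp : 0 < 'C(X + Y, X) by rewrite bin_gt0 leq_addr.
have := congr1 (logn p) h.
rewrite !lognM ?muln_gt0 ?fact_gt0 //.
rewrite !(@logn_fact_ext p _ L) //; try lia.
under [X in _ = X]eq_bigr => k _ do rewrite divnD ?expn_gt0 ?prime_gt0 //.
rewrite !big_split /= /carry. lia.
Qed.

Lemma carry_lemma q m n S : 0 < q -> 1 < S -> 0 < m -> q %| m + n -> ~~ (q %| m) ->
  0 < carry q m (m * S - 1 - m) + carry q n (n * S - n).
Proof.
move=> q0 S1 m0 qmn qm.
rewrite /carry.
have e2 : (m * S - 1 - m) + (n * S - n) + 1 = (m + n) * (S - 1).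
  have h1 : m * 2 <= m * S by rewrite leq_mul2l S1 orbT.
  have h2 : n <= n * S by rewrite leq_pmulr //; lia.
  rewrite !mulnBr !muln1 mulnDl.
  move: h1 h2; rewrite muln2 -addnn.
  move: (m * S) (n * S) => x y; lia.
set a1 := m %% q; set a2 := n %% q; set b1 := (m * S - 1 - m) %% q; set b2 := (n * S - n) %% q.
have la1 : a1 < q by rewrite ltn_mod.
have la2 : a2 < q by rewrite ltn_mod.
have lb1 : b1 < q by rewrite ltn_mod.
have lb2 : b2 < q by rewrite ltn_mod.
have a10 : 0 < a1 by rewrite lt0n; exact: qm.
have d1 : q %| a1 + a2 by rewrite /dvdn modnDm.
have d2 : q %| b1 + b2 + 1.
  by rewrite /dvdn -modnDml modnDm modnDml e2 -/(dvdn q _) dvdn_mulr.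
case/dvdnP: d1 => k1 E1; case/dvdnP: d2 => k2 E2.
have K1 : k1 = 1.
  case: k1 E1 => [|[|k]] E1 //; first lia.
  rewrite mulSn mulSn in E1; lia.
have K2 : k2 = 1.
  case: k2 E2 => [|[|k]] E2 //; first lia.
  rewrite mulSn mulSn in E2; lia.
subst k1 k2; rewrite mul1n in E1 E2.
case: (leqP q (a1 + b1)) => h1; case: (leqP q (a2 + b2)) => h2 /=; lia.
Qed.

Lemma lemmaA p S m n : prime p -> 0 < S -> 0 < m -> 0 < n -> ~~ (p %| m) ->
  p ^ logn p (m + n) %| Hn S m n.
Proof.
move=> pp S0 m0 n0 pm.
have [S1|S1] := leqP S 1.
  have -> : S = 1 by lia.
  by rewrite /Hn muln1 bin_small ?mul0n ?dvdn0 //; lia.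
have hm : m <= m * S - 1.
  have : m * 2 <= m * S by rewrite leq_mul2l S1 orbT.
  move: (m * S) => x; lia.
have hn : n <= n * S by rewrite leq_pmulr //; lia.
have Hp : 0 < Hn S m n by rewrite /Hn muln_gt0 !bin_gt0 hm hn.
rewrite pfactor_dvdn //.
set e := logn p (m + n).
have eL : e < m + n.
  apply: (leq_trans (ltn_expl e (prime_gt1 pp))).
  apply: dvdn_leq; first lia.
  exact: pfactor_dvdnn.
set L := (m + n) * S + 1.
have E1 : m * S - 1 = m + (m * S - 1 - m) by rewrite subnKC.
have E2 : n * S = n + (n * S - n) by rewrite subnKC.
have mS : m * S <= (m + n) * S by rewrite leq_mul2r leq_addr orbT.
have nS : n * S <= (m + n) * S by rewrite leq_mul2r leq_addl orbT.
rewrite /Hn lognM ?bin_gt0 //.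
have hL1 : m + (m * S - 1 - m) < L by rewrite -E1 /L; move: ((m + n) * S) mS => x; lia.
have hL2 : n + (n * S - n) < L by rewrite -E2 /L; move: ((m + n) * S) nS => x; lia.
rewrite E1 E2 !(@legendre_bin p _ _ L) //.
rewrite -/L.
have -> : \sum_(1 <= k < L) carry (p ^ k) m (m * S - 1 - m) +
 \sum_(1 <= k < L) carry (p ^ k) n (n * S - n) =
 \sum_(1 <= k < L) (carry (p ^ k) m (m * S - 1 - m) + carry (p ^ k) n (n * S - n)).
  by rewrite big_split.
have eL2 : e.+1 <= L.
  rewrite /L; have : m + n <= (m + n) * S by rewrite leq_pmulr.
  move: ((m + n) * S) => x; lia.
rewrite (big_cat_nat (n := e.+1) (ltn0Sn e) eL2) /=.
apply: leq_trans (leq_addr _ _).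
apply: (@leq_trans (\sum_(1 <= k < e.+1) 1)).
  by rewrite sum_nat_const_nat muln1 subn1.
rewrite big_nat_cond [X in _ <= X]big_nat_cond.
apply: leq_sum => k /andP[/andP[k1 k2] _].
apply: carry_lemma => //.
- by rewrite expn_gt0 prime_gt0.
- apply: dvdn_trans (pfactor_dvdnn p (m + n)).
  by apply: dvdn_exp2l; lia.
- apply: contra pm; apply: dvdn_trans.
  by rewrite -{1}(expn1 p); apply: dvdn_exp2l.
Qed.

Lemma H_scale p S M N e : prime p -> 0 < S -> 0 < M ->
  p ^ e %| Hn S M N -> p ^ e %| Hn S (p * M) (p * N).
Proof.
move=> pp S0 M0 hd.
have E := @H_ratio p S M N pp S0 M0.
have cop : coprime (p ^ e) (Qf p (M * (S - 1)) * Qf p (N * (S - 1))).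
  by apply: coprimeXl; rewrite coprimeMr !Qf_coprime.
rewrite -(Gauss_dvdl _ cop) E.
exact: dvdn_mulr.
Qed.

Lemma H_scalej p S M N e j : prime p -> 0 < S -> 0 < M ->
  p ^ e %| Hn S M N -> p ^ e %| Hn S (p ^ j * M) (p ^ j * N).
Proof.
move=> pp S0 M0 hd; elim: j => [|j IH]; first by rewrite !mul1n.
rewrite expnS -!mulnA; apply: H_scale => //.
by rewrite muln_gt0 expn_gt0 prime_gt0.
Qed.

Lemma nat_mod_dvdz (a b d : nat) : a = b %[mod d] -> (Posz d %| (Posz a - Posz b)%R)%Z.
Proof. by move=> e; rewrite -eqz_mod_dvd !modz_nat e. Qed.

Lemma H_cong p S M N e j : prime p -> 0 < S -> 0 < M -> p ^ j %| M -> p ^ j %| N ->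
  p ^ e %| Hn S M N ->
  (Posz (p ^ (e + j.+1)) %| (Posz (Hn S (p * M) (p * N)) - Posz (Hn S M N))%R)%Z.
Proof.
move=> pp S0 M0 jM jN hd.
have E := @H_ratio p S M N pp S0 M0.
set Q := Qf p (M * (S - 1)) * Qf p (N * (S - 1)) in E.
set R := Qs p M (M * (S - 1)) * Qs p N (N * (S - 1)) in E.
have RQ : R = Q %[mod p ^ j.+1].
  have h1 : p ^ j.+1 %| p * M by rewrite expnS dvdn_mul.
  have h2 : p ^ j.+1 %| p * N by rewrite expnS dvdn_mul.
  rewrite /R /Q -modnMm (@Qs_mod p M (M * (S - 1)) _ h1) (@Qs_mod p N (N * (S - 1)) _ h2).
  by rewrite modnMm.
have cop : coprime (p ^ (e + j.+1)) Q.
  by apply: coprimeXl; rewrite coprimeMr !Qf_coprime.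
have EZ : ((Posz (Hn S (p * M) (p * N)) - Posz (Hn S M N)) * Posz Q =
          Posz (Hn S M N) * (Posz R - Posz Q))%R.
  have E' : (Posz (Hn S (p * M) (p * N)) * Posz Q = Posz (Hn S M N) * Posz R)%R.
    by rewrite -!PoszM E.
  by rewrite mulrBl mulrBr E'.
rewrite -(@Gauss_dvdzl _ _ (Posz Q)); last by rewrite coprimezE.
rewrite EZ expnD PoszM.
apply: dvdz_mul; first by rewrite dvdzE.
exact: nat_mod_dvdz.
Qed.

Lemma primes_pd p d : prime p -> ~~ (p %| d) -> 0 < d ->
  perm_eq (primes (p * d)) (p :: primes d).
Proof.
move=> pp pd d0; apply: uniq_perm; first exact: primes_uniq.
  by rewrite /= primes_uniq andbT mem_primes (negbTE pd) !andbF.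
move=> q; by rewrite (primesM _ (prime_gt0 pp) d0) primes_prime // !inE.

Qed.

Lemma moeb_pd p d : prime p -> ~~ (p %| d) -> 0 < d ->
  moebius (p * d) = (- moebius d)%R.
Proof.
move=> pp pd d0; have P := @primes_pd p d pp pd d0.
rewrite /moebius (perm_all _ P) (perm_size P) /=.
have -> : logn p (p * d) == 1.
  by rewrite (lognM _ (prime_gt0 pp) d0) logn_prime // eqxx logn_coprime // prime_coprime.
have -> : all (fun q => logn q (p * d) == 1) (primes d) =
          all (fun q => logn q d == 1) (primes d).
  apply: eq_in_all => q; rewrite mem_primes => /and3P[qp _ qd].
  rewrite (lognM _ (prime_gt0 pp) d0) logn_prime //.
  case: (eqVneq q p) => [eqp|neqp]; last by rewrite add0n.
  by subst q; rewrite qd in pd.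
rewrite /=; case: (all (fun q => logn q d == 1) (primes d)) => /=; by rewrite ?oppr0 // exprS mulN1r.
Qed.

Lemma moeb_pd0 p d : prime p -> p %| d -> 0 < d -> moebius (p * d) = 0%R.
Proof.
move=> pp pd d0; rewrite /moebius.
case: ifP => // /allP /(_ p).
rewrite mem_primes pp muln_gt0 prime_gt0 // d0 dvdn_mulr //= => /(_ isT).
rewrite (lognM _ (prime_gt0 pp) d0) logn_prime // eqxx.
have : 0 < logn p d by rewrite logn_gt0 mem_primes pp d0 pd.
by case: (logn p d).
Qed.

Lemma mobius_split (F : nat -> int) g p : prime p -> 0 < g -> p %| g ->
  (\sum_(d <- divisors g) moebius d * F d =
   \sum_(d <- divisors (g %/ p) | ~~ (p %| d)%N) moebius d * (F d - F (p * d)))%R.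
Proof.
move=> pp g0 pg.
have p0 := prime_gt0 pp.
have gp0 : 0 < g %/ p by rewrite divn_gt0 // dvdn_leq.
rewrite (bigID (fun d => p %| d)) /=.
have A : perm_eq [seq d <- divisors g | p %| d] [seq p * y | y <- divisors (g %/ p)].
  apply: uniq_perm.
  - by rewrite filter_uniq // divisors_uniq.
  - by rewrite map_inj_uniq ?divisors_uniq // => x y /eqP; rewrite eqn_pmul2l // => /eqP.
  move=> x; rewrite mem_filter -dvdn_divisors //.
  apply/andP/mapP => [[px xg]|[y]].
  + exists (x %/ p); last by rewrite mulnC divnK.
    by rewrite -dvdn_divisors // -(dvdn_pmul2r p0) !divnK.
  + rewrite -dvdn_divisors // => yg ->; split; first exact: dvdn_mulr.
    by rewrite -(divnK pg) mulnC dvdn_pmul2r.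
have B : perm_eq [seq d <- divisors g | ~~ (p %| d)] [seq d <- divisors (g %/ p) | ~~ (p %| d)].
  apply: uniq_perm; rewrite ?filter_uniq ?divisors_uniq //.
  move=> x; rewrite !mem_filter -!dvdn_divisors //.
  case: (boolP (p %| x)) => //= px.
  apply/idP/idP => xg.
  + have : x %| p * (g %/ p) by rewrite mulnC divnK.
    by rewrite Gauss_dvdr // coprime_sym prime_coprime.
  + apply: dvdn_trans xg _; exact: dvdn_div.
rewrite -[X in (X + _)%R]big_filter -[X in (_ + X)%R]big_filter.
rewrite (perm_big _ A) (perm_big _ B) big_map /=.
rewrite [X in (X + _)%R](bigID (fun d => p %| d)) /=.
rewrite [X in ((X + _) + _)%R]big1_seq ?add0r; last first.
  move=> d /andP[pd]; rewrite -dvdn_divisors // => dg.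
  rewrite moeb_pd0 ?mul0r //.
  by apply: dvdn_gt0 dg.
rewrite big_filter_cond.
rewrite [X in (_ + X)%R](eq_bigl (fun d => ~~ (p %| d)%N)); last by move=> d; rewrite andbT.
rewrite [X in (X + _)%R](eq_bigr (fun i => - (moebius i * F (p * i)))%R); last first.
  move=> d pd; rewrite moeb_pd ?mulNr //; by case: d pd; rewrite ?dvdn0.
under [X in _ = X]eq_bigr => d _ do rewrite mulrBr.
rewrite big_split /= !sumrN addrC.
by [].
Qed.

Definition Xs (S m n : nat) : int := ((-1) ^+ ((m + n) * S) * Posz (Hn S m n))%R.

Lemma lemmaA2 p S m n : prime p -> 0 < S -> 0 < m -> 0 < n ->
  (~~ (p %| m)) || (~~ (p %| n)) -> p ^ logn p (m + n) %| Hn S m n.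
Proof.
move=> pp S0 m0 n0; case: (boolP (p %| m)) => pm /= pn; last exact: lemmaA.
case: (posnP (logn p (m + n))) => [->|]; first by rewrite expn0 dvd1n.
rewrite logn_gt0 mem_primes => /and3P[_ _ pmn].
by rewrite -(dvdn_addr _ pm) pmn in pn.
Qed.

Lemma Xs_dvd p S m n k : p ^ k %| Hn S m n -> (Posz (p ^ k) %| Xs S m n)%Z.
Proof. by move=> h; apply: dvdz_mull. Qed.

Lemma sign_odd (k : nat) : ((-1) ^+ k = (-1) ^+ (odd k) :> int)%R.
Proof. by rewrite signr_odd. Qed.

Lemma core p S j M0 N0 : prime p -> 0 < S -> 0 < M0 -> 0 < N0 ->
  (~~ (p %| M0)) || (~~ (p %| N0)) ->
  (Posz (p ^ (logn p (M0 + N0) + j.+1)) %|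
     (Xs S (p * (p ^ j * M0)) (p * (p ^ j * N0)) - Xs S (p ^ j * M0) (p ^ j * N0))%R)%Z.
Proof.
move=> pp S0 M00 N00 cop.
set e := logn p (M0 + N0).
set M := p ^ j * M0; set N := p ^ j * N0.
have p0 := prime_gt0 pp.
have M0' : 0 < M by rewrite muln_gt0 expn_gt0 p0.
have hA := @lemmaA2 p S M0 N0 pp S0 M00 N00 cop.
have hS := @H_scalej p S M0 N0 e j pp S0 M00 hA.
have hC := @H_cong p S M N e j pp S0 M0' (dvdn_mulr _ (dvdnn _)) (dvdn_mulr _ (dvdnn _)) hS.
rewrite /Xs.
have -> : (p * M + p * N) * S = p * ((M + N) * S) by ring.
set k := (M + N) * S.
rewrite (sign_odd (p * k)) oddM.
have [p2|podd] := even_prime pp; last first.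
  by rewrite podd /= -sign_odd -mulrBr; apply: dvdz_mull.
subst p; rewrite /=.
case: (boolP (odd k)) => ok; last first.
  by rewrite (sign_odd k) (negbTE ok) !expr0 !mul1r.
rewrite (sign_odd k) ok expr0 expr1 mul1r mulN1r opprK.
have oMN : odd (2 ^ j) && odd (M0 + N0).
  by move: ok; rewrite /k oddM /M /N -mulnDr oddM => /andP[].
have j0 : j = 0.
  move: oMN; rewrite /M; case: (posnP j) => // jp.
  by rewrite -(prednK jp) expnS oddM.
have e0 : e = 0.
  by rewrite /e logn_coprime // prime_coprime // dvdn2; case/andP: oMN => _ ->.
move: hC; rewrite j0 e0 /= => hC.
have -> : (Posz (Hn S (2 * M) (2 * N)) + Posz (Hn S M N) =
   (Posz (Hn S (2 * M) (2 * N)) - Posz (Hn S M N)) + Posz (Hn S M N) *+ 2)%R.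
  by rewrite mulr2n addrA subrK.
apply: rpredD => //.
rewrite -mulr_natl; apply: dvdz_mulr.
by rewrite dvdzE.
Qed.

Lemma coprime_notboth p a b : prime p -> coprime a b -> (~~ (p %| a)) || (~~ (p %| b)).
Proof.
move=> pp cab; case: (boolP (p %| a)) => pa //=; apply/negP => pb.
have : p %| gcdn a b by rewrite dvdn_gcd pa pb.
by rewrite (eqP cab) dvdn1 => /eqP p1; rewrite p1 in pp.
Qed.

Lemma NTmain S g a b : 0 < S -> 0 < g -> 0 < a -> 0 < b -> coprime a b ->
  (Posz (g * (a + b)) %|
     (\sum_(d <- divisors g) moebius d * Xs S (g %/ d * a) (g %/ d * b))%R)%Z.
Proof.
move=> S0 g0 a0 b0 cab.
set T := (\sum_(d <- divisors g) _)%R.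
have gab : 0 < g * (a + b) by rewrite muln_gt0 g0 addn_gt0 a0.
rewrite dvdzE /=; apply/(dvdn_partP _ gab) => p; rewrite mem_primes => /and3P[pp _ _].
rewrite p_part.
suff : (Posz (p ^ logn p (g * (a + b))) %| T)%Z by [].
rewrite lognM ?addn_gt0 ?a0 //.
set e0 := logn p (a + b).
have nb := @coprime_notboth p a b pp cab.
have p0 := prime_gt0 pp.
case: (posnP (logn p g)) => [r0|rp].
  rewrite r0 add0n /T big_seq.
  apply: rpred_sum => d dg; apply: dvdz_mull; apply: Xs_dvd.
  have dg' : d %| g by rewrite dvdn_divisors.
  have d0 : 0 < d by apply: dvdn_gt0 dg'.
  set k := g %/ d.
  have k0 : 0 < k by rewrite divn_gt0 // dvdn_leq.
  have pk : ~~ (p %| k).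
    apply/negP => pk.
    have : p \in primes g by rewrite mem_primes pp g0 (dvdn_trans pk) // dvdn_div.
    by rewrite -logn_gt0 r0.
  have E : logn p (k * a + k * b) = e0.
    by rewrite -mulnDr lognM ?addn_gt0 ?a0 // logn_coprime ?prime_coprime.
  rewrite -E; apply: lemmaA2; rewrite ?muln_gt0 ?k0 ?a0 ?b0 //.
  by rewrite !Euclid_dvdM // (negbTE pk) /=.
have pg : p %| g.
  by move: rp; rewrite logn_gt0 mem_primes => /and3P[].
rewrite /T (@mobius_split (fun d => Xs S (g %/ d * a) (g %/ d * b)) g p pp g0 pg) big_seq_cond.
apply: rpred_sum => d /andP[dm pd]; apply: dvdz_mull => /=.
set r := logn p g.
have dgp : d %| g %/ p by rewrite dvdn_divisors // divn_gt0 // dvdn_leq.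
have dg : d %| g by apply: dvdn_trans dgp (dvdn_div pg).
have d0 : 0 < d by apply: dvdn_gt0 dg.
have prd : p ^ r * d %| g.
  rewrite Gauss_dvd ?pfactor_dvdnn ?dg //.
  by apply: coprimeXl; rewrite prime_coprime.
set k := g %/ (p ^ r * d).
have gk : g = k * (p ^ r * d) by rewrite divnK.
have k0 : 0 < k by rewrite divn_gt0 ?muln_gt0 ?expn_gt0 ?p0 ?d0 // dvdn_leq.
have pk : ~~ (p %| k).
  apply/negP => pk.
  have : p ^ r.+1 %| g.
    by rewrite gk expnSr mulnCA dvdn_pmul2l ?expn_gt0 ?p0 // dvdn_mulr.
  by rewrite pfactor_dvdn // ltnn.
set j := r.-1.
have rj : r = j.+1 by rewrite prednK.
have E1 : g %/ d = p * (p ^ j * k).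
  by rewrite gk mulnA mulnK // rj expnS; ring.
have E2 : g %/ (p * d) = p ^ j * k.
  rewrite gk rj expnS.
  have -> : k * (p * p ^ j * d) = (k * p ^ j) * (p * d) by ring.
  by rewrite mulnK ?muln_gt0 ?p0 // mulnC.
rewrite E1 E2 -!mulnA.
have E : logn p (k * a + k * b) = e0.
  by rewrite -mulnDr lognM ?addn_gt0 ?a0 // logn_coprime ?prime_coprime.
rewrite rj addnC -E.
apply: core; rewrite ?muln_gt0 ?k0 ?a0 ?b0 //.
by rewrite !Euclid_dvdM // (negbTE pk) /=.
Qed.
Local Open Scope ring_scope.

Lemma gbinom_nat (n k : nat) : gbinom (Posz n) k = ('C(n, k))%:R.
Proof.
rewrite /gbinom.
have kf : (k`!)%:R != 0 :> rat by rewrite pnatr_eq0 -lt0n fact_gt0.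
apply: (canLR (mulfK kf)).
rewrite -natrM bin_ffact ffact_prod natr_prod.
case: (leqP k n) => kn.
  apply: eq_bigr => i _.
  by rewrite subzn ?(leq_trans (ltnW (ltn_ord i))).
have i0 : (n < k)%N by [].
rewrite (bigD1 (Ordinal i0)) //= subrr mul0r.
by rewrite (bigD1 (Ordinal i0)) //= subnn mul0r.
Qed.

Lemma gbinom_neg (x k : nat) : (0 < k)%N ->
  gbinom (- Posz x) k = (-1) ^+ k * ('C(x + k - 1, k))%:R.
Proof.
move=> k0; rewrite -gbinom_nat /gbinom mulrA; congr (_ / _).
have -> : \prod_(i < k) ((- Posz x - Posz i)%:~R : rat) =
          \prod_(i < k) - ((Posz x + Posz i)%:~R : rat).
  by apply: eq_bigr => i _; rewrite -opprD rmorphN.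
rewrite prodrN card_ord; congr (_ * _).
rewrite (reindex_inj rev_ord_inj) /=.
apply: eq_bigr => i _; congr (_%:~R).
have ik := ltn_ord i.
rewrite subzn; last lia.
rewrite -PoszD; congr Posz; lia.
Qed.
Local Open Scope ring_scope.

Lemma signz_neg (n : nat) : ((-1 : rat) ^ (- Posz n)) = (-1) ^+ n.
Proof. by rewrite -exprnN -exprVn invrN1. Qed.

Lemma divz_help (k d : nat) (u : int) : (0 < d)%N -> ((Posz (k * d) * u) %/ Posz d)%Z = Posz k * u.
Proof.
move=> d0; rewrite PoszM -mulrA [Posz d * u]mulrC mulrA mulzK //.
by rewrite eqz_nat -lt0n.
Qed.

Lemma sum_conv (F : nat -> rat) m1 m2 : (0 < m1)%N ->
  \sum_(1 <= d < m1.+1 | ((d %| m1) && (d %| m2))%N) F d =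
  \sum_(d <- divisors (gcdn m1 m2)) F d.
Proof.
move=> m10; have g0 : (0 < gcdn m1 m2)%N by rewrite gcdn_gt0 m10.
rewrite -big_filter; apply: perm_big; apply: uniq_perm.
- by rewrite filter_uniq // iota_uniq.
- exact: divisors_uniq.
move=> d; rewrite mem_filter -dvdn_divisors // dvdn_gcd mem_index_iota.
case: (boolP ((d %| m1) && (d %| m2))%N) => //= /andP[dm1 _].
have := dvdn_gt0 m10 dm1; have := dvdn_leq m10 dm1; lia.
Qed.

Theorem theorem4p10 (m1 m2 : nat) (tau : int) :
  (1 <= m1)%N -> (1 <= m2)%N -> exists z : int, nDT m1 m2 tau = z%:~R.
Proof.
move=> m1p m2p.
set g := gcdn m1 m2.
have g0 : (0 < g)%N by rewrite gcdn_gt0 m1p.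
have gm1 : (g %| m1)%N := dvdn_gcdl m1 m2.
have gm2 : (g %| m2)%N := dvdn_gcdr m1 m2.
set a := (m1 %/ g)%N; set b := (m2 %/ g)%N.
have m1E : m1 = (a * g)%N by rewrite divnK.
have m2E : m2 = (b * g)%N by rewrite divnK.
have a0 : (0 < a)%N by rewrite divn_gt0 // dvdn_leq.
have b0 : (0 < b)%N by rewrite divn_gt0 // dvdn_leq.
have cab : coprime a b.
  have h := muln_gcdl a b g; rewrite -m1E -m2E -/g -{2}[g]mul1n in h.
  by rewrite /coprime -(eqn_pmul2r g0) h.
suff [W [HW Hdiv]] : exists W : nat -> int,
    (forall d, d \in divisors g ->
      (moebius d)%:~R
      * (-1) ^ (((m1 + m2)%:Z * (tau + 1)) %/ d%:Z)%Z
      * gbinom (((m1%:Z * tau + m1%:Z) %/ d%:Z)%Z - 1) (m1 %/ d)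
      * gbinom (((m2%:Z * tau + m2%:Z) %/ d%:Z)%Z) (m2 %/ d)
      = (moebius d * W d)%:~R) /\
    ((m1 + m2)%:Z %| \sum_(d <- divisors g) moebius d * W d)%Z.
  exists ((\sum_(d <- divisors g) moebius d * W d) %/ (m1 + m2)%:Z)%Z.
  rewrite /nDT sum_conv // -/g big_seq (eq_bigr _ HW) -big_seq -rmorph_sum /=.
  have mn0 : (m1 + m2)%:Z != 0 by rewrite eqz_nat; lia.
  rewrite -{1}(divzK Hdiv) intrM mulrC.
  have -> : ((m1 + m2)%N%:R : rat) = (m1 + m2)%:Z%:~R by [].
  rewrite mulfK // intr_eq0 //.
have dvd_m : forall d, d \in divisors g -> [/\ (0 < d)%N, m1 = (m1 %/ d * d)%N, m2 = (m2 %/ d * d)%N,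
      (m1 %/ d = g %/ d * a)%N & (m2 %/ d = g %/ d * b)%N].
  move=> d; rewrite -dvdn_divisors // => dg.
  have d0 : (0 < d)%N by apply: dvdn_gt0 dg.
  split => //.
  - by rewrite divnK // (dvdn_trans dg gm1).
  - by rewrite divnK // (dvdn_trans dg gm2).
  - by rewrite m1E -muln_divA // mulnC.
  - by rewrite m2E -muln_divA // mulnC.
case: tau => t.
- exists (fun d => Xs t.+1 (m1 %/ d) (m2 %/ d)); split.
    move=> d /dvd_m [d0 E1 E2 _ _].
    move: (m1 %/ d)%N (m2 %/ d)%N E1 E2 => k1 k2 E1 E2.
    have k10 : (0 < k1)%N by move: m1p; rewrite E1 muln_gt0 => /andP[].
    rewrite [in X in X = _]E1 [in X in X = _]E2.
    have tS : Posz t + 1 = Posz t.+1 by rewrite -addn1 PoszD.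
    have e1 : ((((k1 * d)%N + (k2 * d)%N)%:Z * (Posz t + 1)) %/ d%:Z)%Z = Posz ((k1 + k2) * t.+1).
      by rewrite tS -mulnDl divz_help // PoszM.
    have e2 : (((k1 * d)%N%:Z * Posz t + (k1 * d)%N%:Z) %/ d%:Z)%Z = Posz (k1 * t.+1).
      by rewrite -[X in _ + X]mulr1 -mulrDr tS divz_help // PoszM.
    have e3 : (((k2 * d)%N%:Z * Posz t + (k2 * d)%N%:Z) %/ d%:Z)%Z = Posz (k2 * t.+1).
      by rewrite -[X in _ + X]mulr1 -mulrDr tS divz_help // PoszM.
    rewrite e1 e2 e3 -exprnP subzn; last by rewrite muln_gt0 k10.
    rewrite !gbinom_nat /Xs /Hn.
    by rewrite !intrM rmorphXn rmorphN1 -pmulrn natrM !mulrA.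
  rewrite big_seq (eq_bigr (fun d => moebius d * Xs t.+1 (g %/ d * a) (g %/ d * b))); last first.
    by move=> d /dvd_m[_ _ _ -> ->].
  rewrite -big_seq m1E m2E -mulnDl mulnC.
  by apply: NTmain.
- exists (fun d => Xs t.+1 (m2 %/ d) (m1 %/ d)); split.
    move=> d /dvd_m [d0 E1 E2 _ _].
    move: (m1 %/ d)%N (m2 %/ d)%N E1 E2 => k1 k2 E1 E2.
    have k10 : (0 < k1)%N by move: m1p; rewrite E1 muln_gt0 => /andP[].
    have k20 : (0 < k2)%N by move: m2p; rewrite E2 muln_gt0 => /andP[].
    rewrite [in X in X = _]E1 [in X in X = _]E2.
    have tS : Negz t + 1 = - Posz t by rewrite NegzE -addn1 PoszD opprD addrK.
    have e1 : ((((k1 * d)%N + (k2 * d)%N)%:Z * (Negz t + 1)) %/ d%:Z)%Z = - Posz ((k1 + k2) * t).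
      by rewrite tS -mulnDl divz_help // PoszM mulrN.
    have e2 : (((k1 * d)%N%:Z * Negz t + (k1 * d)%N%:Z) %/ d%:Z)%Z = - Posz (k1 * t).
      by rewrite -[X in _ + X]mulr1 -mulrDr tS divz_help // PoszM mulrN.
    have e3 : (((k2 * d)%N%:Z * Negz t + (k2 * d)%N%:Z) %/ d%:Z)%Z = - Posz (k2 * t).
      by rewrite -[X in _ + X]mulr1 -mulrDr tS divz_help // PoszM mulrN.
    rewrite e1 e2 e3 signz_neg -opprD -PoszD !gbinom_neg //.
    have n1 : (k1 * t + 1 + k1 - 1 = k1 * t.+1)%N by rewrite mulnS; lia.
    have n2 : (k2 * t + k2 - 1 = k2 * t.+1 - 1)%N by rewrite mulnS; lia.
    rewrite n1 n2 /Xs /Hn !intrM rmorphXn rmorphN1 -pmulrn natrM.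
    have sg : (-1 : rat) ^+ ((k1 + k2) * t) * (-1) ^+ k1 * (-1) ^+ k2 = (-1) ^+ ((k2 + k1) * t.+1).
      by rewrite -!exprD; congr (_ ^+ _); ring.
    rewrite -sg; ring.
  rewrite big_seq (eq_bigr (fun d => moebius d * Xs t.+1 (g %/ d * b) (g %/ d * a))); last first.
    by move=> d /dvd_m[_ _ _ -> ->].
  rewrite -big_seq m1E m2E addnC -mulnDl mulnC.
  apply: NTmain => //; by rewrite coprime_sym.
Qed.
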